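(* Let $\mu_0,\mu_1,\dots,\mu_\ell$ be the sequence of distributions obtained by applying a sequence of lossy moves $v_1^\downarrow,\dots,v_\ell^\downarrow$ to $\mu_0$. Then there is a sequence of distributions $\mu'_0,\mu'_1,\dots,\mu'_\ell$ obtained from $\mu'_0=\mu_0$ by a weight-constrained sequence of moves such that $\mu'_i(\{x\})\ge\mu_i(\{x\})$ for every $1\le i\le\ell$ and every $x\in\mathbb R$.
   Context: A distribution is a finite set $\{(x_1,m_1),\dots,(x_k,m_k)\}$ with $m_i>0$; signed distributions allow arbitrary real $m_i$; $\mu(A)=\sum_{x_i\in A}m_i$; $M_j[\mu]=\sum_i m_ix_i^j$. A move $v=([a,b],\delta)$ has $b-a=1$, $\delta$ a signed distribution on $[a,b]$ with $M_0[\delta]=M_1[\delta]=0$, center $\frac{a+b}2$; it can be applied to $\mu$ if $\mu+\delta$ is a distribution, giving $v\mu=\mu+\delta$. The lossy move $v^\downarrow=([a,b],\delta-\{(\frac{a+b}2,1)\})$ is applied analogously. For a sequence of moves producing $\mu_0,\dots,\mu_\ell$, $\mu_{\max}\{x>a\}=\max_i\mu_i\{x>a\}$; the sequence is weight-constrained if for every $a\in\mathbb R$ the number of its moves centered in $(a,\infty)$ is at most $\mu_{\max}\{x>a\}$. *)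

(* Defs.v *)
From Stdlib Require Import Reals Lra List.
Import ListNotations.
Open Scope R_scope.

(* A signed distribution is represented by a finite list of (point, mass)
   pairs; repeated points are allowed and their masses add up.  Thus the
   list represents the signed distribution x |-> mass d x (zero masses
   being dropped), and the sum of signed distributions is list concatenation. *)
Definition sdist := list (R * R).

Definition mass (d : sdist) (x : R) : R :=
  fold_right (fun p s => (if Req_EM_T (fst p) x then snd p else 0) + s) 0 d.

Definition mass_gt (d : sdist) (a : R) : R :=
  fold_right (fun p s => (if Rlt_dec a (fst p) then snd p else 0) + s) 0 d.

Definition moment (j : nat) (d : sdist) : R :=
  fold_right (fun p s => snd p * (fst p) ^ j + s) 0 d.

(* A (nonnegative) distribution: every point carries nonnegative total mass,
   i.e. after merging equal points and dropping zero masses, all masses are > 0. *)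
Definition is_dist (d : sdist) : Prop := forall x, mass d x >= 0.

(* A move ([a, a+1], delta) is represented by the pair (a, delta). *)
Definition move := (R * sdist)%type.
Definition mv_left (v : move) : R := fst v.
Definition mv_delta (v : move) : sdist := snd v.
Definition center (v : move) : R := mv_left v + 1 / 2.

Definition valid_move (v : move) : Prop :=
  (forall p, In p (mv_delta v) -> mv_left v <= fst p <= mv_left v + 1) /\
  moment 0 (mv_delta v) = 0 /\ moment 1 (mv_delta v) = 0.

Definition lossy_delta (v : move) : sdist :=
  mv_delta v ++ [(center v, -1)].

Fixpoint dists_of (mu : sdist) (ds : list sdist) : list sdist :=
  mu :: match ds with
        | [] => []
        | d :: ds' => dists_of (mu ++ d) ds'
        end.

Fixpoint applicable (mu : sdist) (ds : list sdist) : Prop :=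
  match ds with
  | [] => True
  | d :: ds' => is_dist (mu ++ d) /\ applicable (mu ++ d) ds'
  end.

Definition seq_moves (mu0 : sdist) (vs : list move) : list sdist :=
  dists_of mu0 (map mv_delta vs).
Definition seq_lossy (mu0 : sdist) (vs : list move) : list sdist :=
  dists_of mu0 (map lossy_delta vs).

Definition mu_max_gt (mus : list sdist) (a : R) : R :=
  fold_right (fun d m => Rmax (mass_gt d a) m) 0 mus.

Definition count_centered_gt (vs : list move) (a : R) : nat :=
  length (filter (fun v => if Rlt_dec a (center v) then true else false) vs).

Definition weight_constrained (mu0 : sdist) (vs : list move) : Prop :=
  forall a : R, INR (count_centered_gt vs a) <= mu_max_gt (seq_moves mu0 vs) a.

(* Main.v *)
Require Import Defs.
From Stdlib Require Import Reals List Lra Lia.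
Import ListNotations.
Open Scope R_scope.

Lemma mass_app (l1 l2 : sdist) x : mass (l1 ++ l2) x = mass l1 x + mass l2 x.
Proof. induction l1 as [|p l IH]; simpl; [lra|]. unfold mass in *; simpl. rewrite IH; lra. Qed.

Lemma mass_gt_app (l1 l2 : sdist) a : mass_gt (l1 ++ l2) a = mass_gt l1 a + mass_gt l2 a.
Proof. induction l1 as [|p l IH]; simpl; [lra|]. unfold mass_gt in *; simpl. rewrite IH; lra. Qed.

Definition dropx (y : R) (d : sdist) : sdist :=
  filter (fun q => if Req_EM_T (fst q) y then false else true) d.

Lemma mass_gt_split (d : sdist) a y :
  mass_gt d a = (if Rlt_dec a y then mass d y else 0) + mass_gt (dropx y d) a.
Proof.
  induction d as [|p l IH]; simpl.
  - destruct (Rlt_dec a y); unfold mass, mass_gt; simpl; lra.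
  - unfold dropx in *; simpl.
    destruct (Req_EM_T (fst p) y) as [E|E].
    + unfold mass_gt at 1; simpl. fold (mass_gt l a). rewrite IH.
      unfold mass at 1; simpl. fold (mass l y).
      destruct (Req_EM_T (fst p) y); [|congruence].
      rewrite E; destruct (Rlt_dec a y); lra.
    + unfold mass_gt; simpl. fold (mass_gt l a).
      fold (mass_gt (filter (fun q : R * R => if Req_EM_T (fst q) y then false else true) l) a).
      rewrite IH. unfold mass at 1; simpl; fold (mass l y).
      destruct (Req_EM_T (fst p) y); [congruence|]. destruct (Rlt_dec a y); lra.
Qed.

Lemma mass_dropx d y x : mass (dropx y d) x = if Req_EM_T x y then 0 else mass d x.
Proof.
  induction d as [|p l IH]; simpl.
  - destruct (Req_EM_T x y); reflexivity.
  - unfold dropx in *; simpl. destruct (Req_EM_T (fst p) y) as [E|E].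
    + rewrite IH. unfold mass at 2; simpl; fold (mass l x).
      destruct (Req_EM_T x y); destruct (Req_EM_T (fst p) x); try lra; congruence.
    + unfold mass; simpl. fold (mass l x).
      fold (mass (filter (fun q : R * R => if Req_EM_T (fst q) y then false else true) l) x).
      fold (mass l x) in IH.
      fold (mass (filter (fun q : R * R => if Req_EM_T (fst q) y then false else true) l) x) in IH.
      rewrite IH. destruct (Req_EM_T x y); destruct (Req_EM_T (fst p) x); try lra; congruence.
Qed.

Lemma mass_gt_nonneg : forall n (d : sdist) a, (length d <= n)%nat -> is_dist d -> mass_gt d a >= 0.
Proof.
  induction n as [|n IH]; intros d a Hl Hd.
  - destruct d; simpl in Hl; [unfold mass_gt; simpl; lra | lia].
  - destruct d as [|p l]; [unfold mass_gt; simpl; lra|].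
    rewrite (mass_gt_split _ a (fst p)).
    assert (H1 : mass_gt (dropx (fst p) (p :: l)) a >= 0).
    { apply IH.
      - unfold dropx; simpl. destruct (Req_EM_T (fst p) (fst p)); [|congruence].
        simpl in Hl. pose proof (filter_length_le (fun q : R * R => if Req_EM_T (fst q) (fst p) then false else true) l). lia.
      - intro x. rewrite mass_dropx. destruct (Req_EM_T x (fst p)); [lra|apply Hd]. }
    specialize (Hd (fst p)). destruct (Rlt_dec a (fst p)); lra.
Qed.

Lemma mass_gt_dist d a : is_dist d -> mass_gt d a >= 0.
Proof. intros; eapply mass_gt_nonneg; eauto. Qed.

Lemma mass_center v x : mass [(center v, -1)] x <= 0.
Proof. unfold mass; simpl. destruct (Req_EM_T (center v) x); lra. Qed.

Lemma dom_nth : forall vs (mu nu : sdist), (forall x, mass nu x >= mass mu x) ->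
  forall i x, mass (nth i (dists_of nu (map mv_delta vs)) []) x >=
              mass (nth i (dists_of mu (map lossy_delta vs)) []) x.
Proof.
  induction vs as [|v vs IH]; intros mu nu H i x.
  - destruct i as [|[|i]]; simpl; [apply H| |]; unfold mass; simpl; lra.
  - destruct i as [|i]; simpl; [apply H|].
    apply IH. intro y. unfold lossy_delta. rewrite !mass_app.
    pose proof (mass_center v y). specialize (H y). lra.
Qed.

Lemma dom_app : forall vs (mu nu : sdist), (forall x, mass nu x >= mass mu x) ->
  applicable mu (map lossy_delta vs) -> applicable nu (map mv_delta vs).
Proof.
  induction vs as [|v vs IH]; intros mu nu H Ha; simpl in *; auto.
  destruct Ha as [Hd Ha].
  assert (Hs : forall x, mass (nu ++ mv_delta v) x >= mass (mu ++ lossy_delta v) x).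
  { intro y. unfold lossy_delta. rewrite !mass_app.
    pose proof (mass_center v y). specialize (H y). lra. }
  split.
  - intro x. specialize (Hd x). specialize (Hs x). lra.
  - eapply IH; eauto.
Qed.

Lemma wc : forall vs (mu nu : sdist) a k, mass_gt nu a >= mass_gt mu a + k ->
  is_dist mu -> applicable mu (map lossy_delta vs) ->
  mu_max_gt (dists_of nu (map mv_delta vs)) a >= k + INR (count_centered_gt vs a).
Proof.
  induction vs as [|v vs IH]; intros mu nu a k H Hmu Ha.
  - simpl. unfold count_centered_gt; simpl.
    pose proof (mass_gt_dist mu a Hmu). pose proof (Rmax_l (mass_gt nu a) 0). lra.
  - simpl in *. destruct Ha as [Hd Ha].
    set (e := if Rlt_dec a (center v) then 1 else 0).
    assert (Hc : INR (count_centered_gt (v :: vs) a) = e + INR (count_centered_gt vs a)).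
    { unfold count_centered_gt, e. cbn [filter]. destruct (Rlt_dec a (center v)).
      - cbn [length]. rewrite S_INR; lra.
      - lra. }
    assert (Hn : mass_gt (nu ++ mv_delta v) a >= mass_gt (mu ++ lossy_delta v) a + (k + e)).
    { unfold lossy_delta. rewrite !mass_gt_app. unfold e, mass_gt at 4 5; simpl.
      fold (mass_gt (mv_delta v) a). destruct (Rlt_dec a (center v)); lra. }
    pose proof (IH _ _ a (k + e) Hn Hd Ha).
    pose proof (Rmax_r (mass_gt nu a) (mu_max_gt (dists_of (nu ++ mv_delta v) (map mv_delta vs)) a)).
    rewrite Hc. lra.
Qed.

Theorem mainTheorem8 (mu0 : sdist) (vs : list move) :
  is_dist mu0 ->
  Forall valid_move vs ->
  applicable mu0 (map lossy_delta vs) ->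
  exists ws : list move,
    length ws = length vs /\
    Forall valid_move ws /\
    applicable mu0 (map mv_delta ws) /\
    weight_constrained mu0 ws /\
    (forall (i : nat) (x : R), (1 <= i <= length vs)%nat ->
       mass (nth i (seq_moves mu0 ws) []) x >= mass (nth i (seq_lossy mu0 vs) []) x).
Proof.
  intros Hd Hv Ha. exists vs.
  assert (Hr : forall x, mass mu0 x >= mass mu0 x) by (intro; lra).
  split; [reflexivity|]. split; [exact Hv|]. split.
  - eapply dom_app; eauto.
  - split.
    + intro a. unfold seq_moves.
      pose proof (wc vs mu0 mu0 a 0 ltac:(lra) Hd Ha). lra.
    + intros i x _. unfold seq_moves, seq_lossy. apply dom_nth; auto.
Qed.
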